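(* In the compulsory constrained two-facility location setting described in the context, for every location profile $\mathbf{x}\in\mathbb{R}^n$, the peak of $\mathrm{cen}(\mathbf{x})$ in $AP$ is an optimal solution for the maximum cost objective, i.e. it minimizes $\max_{j}\max\{|y_1-x_j|,|y_2-x_j|\}$ over all feasible $(y_1,y_2)$.
   Context: $n$ agents have locations $x_1,\dots,x_n\in\mathbb{R}$; $\mathrm{cen}(\mathbf{x})=(\min_j x_j+\max_j x_j)/2$. $A=\{a_1\le\dots\le a_m\}$, $m\ge2$, is a multiset of alternative locations; a feasible outcome places $F_1$ at $y_1\in A$ and $F_2$ at $y_2\in A\setminus\{y_1\}$ (one copy removed). $AP=\{(a_1,a_2),\dots,(a_{m-1},a_m)\}$. Zones: $Z_1=(-\infty,\frac{a_1+a_3}{2}]$, $Z_k=(\frac{a_{k-1}+a_{k+1}}{2},\frac{a_k+a_{k+2}}{2}]$ for $2\le k\le m-2$, $Z_{m-1}=(\frac{a_{m-2}+a_m}{2},\infty)$ ($Z_1=\mathbb{R}$ if $m=2$); the peak in $AP$ of a point $z\in Z_k$ is $(a_k,a_{k+1})$. *)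

(* Defs.v *)
From Stdlib Require Import Reals Lra Lia.
Open Scope R_scope.

(* Agents are indexed 0..n-1 (x : nat -> R, only x 0 .. x (n-1) matter).
   Alternatives are indexed 0..m-1 (a : nat -> R), sorted nondecreasingly. *)

Fixpoint min_upto (f : nat -> R) (k : nat) : R :=
  match k with
  | O => f O
  | S k' => Rmin (min_upto f k') (f k)
  end.

Fixpoint max_upto (f : nat -> R) (k : nat) : R :=
  match k with
  | O => f O
  | S k' => Rmax (max_upto f k') (f k)
  end.

Definition cen (n : nat) (x : nat -> R) : R :=
  (min_upto x (n - 1) + max_upto x (n - 1)) / 2.

Definition max_cost (n : nat) (x : nat -> R) (y1 y2 : R) : R :=
  max_upto (fun j => Rmax (Rabs (y1 - x j)) (Rabs (y2 - x j))) (n - 1).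

Definition sorted_alts (m : nat) (a : nat -> R) : Prop :=
  forall i j, (i <= j)%nat -> (j < m)%nat -> a i <= a j.

(* Zones, 0-based: zone k (0 <= k <= m-2) has peak (a_k, a_(k+1)).
   Z_0 = (-oo, (a_0+a_2)/2], Z_k = ((a_(k-1)+a_(k+1))/2, (a_k+a_(k+2))/2],
   Z_(m-2) = ((a_(m-3)+a_(m-1))/2, +oo); Z_0 = R when m = 2. *)
Definition in_zone (m : nat) (a : nat -> R) (k : nat) (z : R) : Prop :=
  (k <= m - 2)%nat /\
  (k = O \/ (a (k - 1)%nat + a (S k)) / 2 < z) /\
  (k = (m - 2)%nat \/ z <= (a k + a (S (S k))) / 2).

(* Main.v *)
Require Import Defs.
From Stdlib Require Import Reals.
From Stdlib Require Import Lra Lia.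
Open Scope R_scope.

Lemma max_upto_ge f k j : (j <= k)%nat -> f j <= max_upto f k.
Proof.
  induction k; intros H; simpl.
  - replace j with O by lia; lra.
  - destruct (Nat.eq_dec j (S k)) as [->|Hn].
    + apply Rmax_r.
    + eapply Rle_trans; [apply IHk; lia| apply Rmax_l].
Qed.

Lemma max_upto_le f k B : (forall j, (j <= k)%nat -> f j <= B) -> max_upto f k <= B.
Proof.
  induction k; intros H; simpl.
  - apply H; lia.
  - apply Rmax_lub; [apply IHk; intros; apply H; lia | apply H; lia].
Qed.

Lemma min_upto_le f k j : (j <= k)%nat -> min_upto f k <= f j.
Proof.
  induction k; intros H; simpl.
  - replace j with O by lia; lra.
  - destruct (Nat.eq_dec j (S k)) as [->|Hn].
    + apply Rmin_r.
    + eapply Rle_trans; [apply Rmin_l | apply IHk; lia].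
Qed.

Lemma max_upto_attained f k : exists j, (j <= k)%nat /\ max_upto f k = f j.
Proof.
  induction k; simpl.
  - exists O; split; auto.
  - destruct IHk as [j [Hj Hе]].
    unfold Rmax; destruct (Rle_dec (max_upto f k) (f (S k))).
    + exists (S k); split; auto.
    + exists j; split; auto.
Qed.

Lemma min_upto_attained f k : exists j, (j <= k)%nat /\ min_upto f k = f j.
Proof.
  induction k; simpl.
  - exists O; split; auto.
  - destruct IHk as [j [Hj He]].
    unfold Rmin; destruct (Rle_dec (min_upto f k) (f (S k))).
    + exists j; split; auto.
    + exists (S k); split; auto.
Qed.

Lemma abs_bound L U t y : L <= t -> t <= U ->
  Rabs (y - t) <= Rabs (y - (L+U)/2) + (U-L)/2.
Proof.
  intros; unfold Rabs; destruct (Rcase_abs (y - t)); destruct (Rcase_abs (y - (L+U)/2)); lra.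
Qed.

Lemma abs_lower L U y : L <= U ->
  Rabs (y - (L+U)/2) + (U-L)/2 <= Rmax (Rabs (y - L)) (Rabs (y - U)).
Proof.
  intros; destruct (Rle_dec y ((L+U)/2)).
  - eapply Rle_trans; [|apply Rmax_r].
    unfold Rabs; destruct (Rcase_abs (y - U)); destruct (Rcase_abs (y - (L+U)/2)); lra.
  - eapply Rle_trans; [|apply Rmax_l].
    unfold Rabs; destruct (Rcase_abs (y - L)); destruct (Rcase_abs (y - (L+U)/2)); lra.
Qed.

Lemma comb m a k c t : sorted_alts m a -> in_zone m a k c -> (t < m)%nat ->
  ((k + 2 <= t)%nat \/ (t + 1 <= k)%nat) ->
  Rabs (a k - c) <= Rabs (a t - c) /\ Rabs (a (S k) - c) <= Rabs (a t - c).
Proof.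
  intros Hs [Hk [H1 H2]] Ht [Ht2|Ht2].
  - destruct H2 as [H2|H2]; [lia|].
    assert (a k <= a (S k)) by (apply Hs; lia).
    assert (a (S k) <= a (S (S k))) by (apply Hs; lia).
    assert (a (S (S k)) <= a t) by (apply Hs; lia).
    unfold Rabs; destruct (Rcase_abs (a k - c)); destruct (Rcase_abs (a (S k) - c));
      destruct (Rcase_abs (a t - c)); split; lra.
  - destruct H1 as [H1|H1]; [lia|].
    assert (a k <= a (S k)) by (apply Hs; lia).
    assert (a (k-1)%nat <= a k) by (apply Hs; lia).
    assert (a t <= a (k-1)%nat) by (apply Hs; lia).
    unfold Rabs; destruct (Rcase_abs (a k - c)); destruct (Rcase_abs (a (S k) - c));
      destruct (Rcase_abs (a t - c)); split; lra.
Qed.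

Theorem lemma3 (n m : nat) (x a : nat -> R) (k : nat) :
  (0 < n)%nat -> (2 <= m)%nat -> sorted_alts m a ->
  in_zone m a k (cen n x) ->
  forall i j : nat, (i < m)%nat -> (j < m)%nat -> i <> j ->
  max_cost n x (a k) (a (S k)) <= max_cost n x (a i) (a j).
Proof.
  intros Hn Hm Hs Hz i j Hi Hj Hij.
  set (L := min_upto x (n-1)). set (U := max_upto x (n-1)).
  assert (Hc : cen n x = (L+U)/2) by reflexivity.
  assert (HLU : forall t, (t <= n-1)%nat -> L <= x t /\ x t <= U).
  { intros; split; [apply min_upto_le | apply max_upto_ge]; auto. }
  destruct (min_upto_attained x (n-1)) as [jl [Hjl Hel]].
  destruct (max_upto_attained x (n-1)) as [ju [Hju Heu]].
  fold L in Hel. fold U in Heu.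
  assert (HLU2 : L <= U) by (destruct (HLU jl Hjl); lra).
  set (c := cen n x) in *.
  set (h := (U - L)/2).
  assert (Hup : max_cost n x (a k) (a (S k)) <= Rmax (Rabs (a k - c)) (Rabs (a (S k) - c)) + h).
  { unfold max_cost; apply max_upto_le; intros t Ht.
    destruct (HLU t Ht).
    pose proof (abs_bound L U (x t) (a k)). pose proof (abs_bound L U (x t) (a (S k))).
    rewrite Hc; unfold h.
    apply Rmax_lub.
    - eapply Rle_trans; [apply H1; auto|]. pose proof (Rmax_l (Rabs (a k - (L + U) / 2)) (Rabs (a (S k) - (L + U) / 2))). lra.
    - eapply Rle_trans; [apply H2; auto|]. pose proof (Rmax_r (Rabs (a k - (L + U) / 2)) (Rabs (a (S k) - (L + U) / 2))). lra. }
  assert (Hlo : forall y, Rabs (y - c) + h <= Rmax (Rabs (y - x jl)) (Rabs (y - x ju))).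
  { intros y. rewrite <- Hel, <- Heu, Hc. unfold h. apply abs_lower; auto. }
  assert (Hmi : Rabs (a i - c) + h <= max_cost n x (a i) (a j)).
  { eapply Rle_trans; [apply Hlo|]. apply Rmax_lub.
    - eapply Rle_trans; [apply Rmax_l|].
      apply (max_upto_ge (fun t => Rmax (Rabs (a i - x t)) (Rabs (a j - x t)))); auto.
    - eapply Rle_trans; [apply Rmax_l|].
      apply (max_upto_ge (fun t => Rmax (Rabs (a i - x t)) (Rabs (a j - x t)))); auto. }
  assert (Hmj : Rabs (a j - c) + h <= max_cost n x (a i) (a j)).
  { eapply Rle_trans; [apply Hlo|]. apply Rmax_lub.
    - eapply Rle_trans; [apply Rmax_r|].
      apply (max_upto_ge (fun t => Rmax (Rabs (a i - x t)) (Rabs (a j - x t)))); auto.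
    - eapply Rle_trans; [apply Rmax_r|].
      apply (max_upto_ge (fun t => Rmax (Rabs (a i - x t)) (Rabs (a j - x t)))); auto. }
  eapply Rle_trans; [apply Hup|].
  assert (Hkm : (k <= m - 2)%nat) by (destruct Hz; auto).
  assert (Hgoal : Rmax (Rabs (a k - c)) (Rabs (a (S k) - c)) <= Rabs (a i - c)
               \/ Rmax (Rabs (a k - c)) (Rabs (a (S k) - c)) <= Rabs (a j - c)).
  { destruct (Nat.le_gt_cases (k+2) i) as [Hi2|Hi2].
    - left; destruct (comb m a k c i Hs Hz Hi (or_introl Hi2)); apply Rmax_lub; auto.
    - destruct (Nat.le_gt_cases (k+2) j) as [Hj2|Hj2].
      + right; destruct (comb m a k c j Hs Hz Hj (or_introl Hj2)); apply Rmax_lub; auto.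
      + destruct (Nat.le_gt_cases (i+1) k) as [Hi3|Hi3].
        * left; destruct (comb m a k c i Hs Hz Hi (or_intror Hi3)); apply Rmax_lub; auto.
        * destruct (Nat.le_gt_cases (j+1) k) as [Hj3|Hj3].
          -- right; destruct (comb m a k c j Hs Hz Hj (or_intror Hj3)); apply Rmax_lub; auto.
          -- assert ((i = k /\ j = S k) \/ (i = S k /\ j = k)) as [[-> ->]|[-> ->]] by lia.
             ++ apply Rmax_case_strong; intros; [left|right]; lra.
             ++ apply Rmax_case_strong; intros; [right|left]; lra. }
  destruct Hgoal; lra.
Qed.
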